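(* Let $\mathbf{A}$, $\mathbf{B}$ be $\sigma$-structures. The following are equivalent: (1) there exist matrices $P\in\mathbb{R}^{B\times A}$ and $Q\in\mathbb{R}^{\mathcal{C}_\mathbf{B}\times\mathcal{C}_\mathbf{A}}$, both doubly stochastic, such that for every $\ell\in\mathcal{L}_\sigma$ it holds that $P M^{\ell}_{\mathbf{A}}=M^{\ell}_{\mathbf{B}}Q$ and $M^{\ell}_{\mathbf{A}}Q^T=P^T M^{\ell}_{\mathbf{B}}$; (2) $\mathbf{A}$ and $\mathbf{B}$ have the same iterated degree sequence; (3) $\mathbf{A}$ and $\mathbf{B}$ have a common equitable partition. If, additionally, $\mathbf{A}$ and $\mathbf{B}$ are graphs, then the following is also equivalent to (1)–(3): (4) there exists a doubly stochastic matrix $P\in\mathbb{R}^{B\times A}$ such that $P N_{\mathbf{A}}=N_{\mathbf{B}}P$, where $N_\mathbf{A}$, $N_\mathbf{B}$ are the adjacency matrices of $\mathbf{A}$, $\mathbf{B}$.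
   Context: A signature $\sigma$ is a finite set of relation symbols $R$, each with an arity $\operatorname{ar}(R)\ge 1$. A $\sigma$-structure $\mathbf{A}$ consists of a finite universe $A$ and, for each $R\in\sigma$, a non-empty relation $R^{\mathbf{A}}\subseteq A^{\operatorname{ar}(R)}$. For a tuple $\mathbf{a}$, $a_i$ denotes its $i$-th entry and $\{\mathbf{a}\}$ the set of its entries. The constraint set of $\mathbf{A}$ is $\mathcal{C}_\mathbf{A}=\{R(\mathbf{a}) : R\in\sigma,\ \mathbf{a}\in R^{\mathbf{A}}\}$, where $R(\mathbf{a})$ are formal symbols. Let $\mathcal{L}_\sigma=\{(S,R): R\in\sigma,\ S\subseteq[\operatorname{ar}(R)]\}$. The factor graph of $\mathbf{A}$ is the bipartite graph with vertex set $A\cup\mathcal{C}_\mathbf{A}$ (disjoint union) and edges $\{a,R(\mathbf{a})\}$ whenever $a\in\{\mathbf{a}\}$; such an edge has label $(S,R)$ with $S=\{i: a_i=a\}$. Iterated degrees: $\delta^{\mathbf{A}}_0(v)$ is one of two fixed symbols according to whether $v\in A$ or $v\in\mathcal{C}_\mathbf{A}$; for $j\ge1$, $\delta^{\mathbf{A}}_j(v)$ is the multiset $\{\{(\ell_{\{v,w\}},\delta^{\mathbf{A}}_{j-1}(w)) : w \text{ adjacent to } v\}\}$ where $\ell_{\{v,w\}}$ is the edge label; $\delta^{\mathbf{A}}(v)=(\delta^{\mathbf{A}}_0(v),\delta^{\mathbf{A}}_1(v),\dots)$. The iterated degree sequence of $\mathbf{A}$ is the multiset $\{\{\delta^{\mathbf{A}}(v):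 v\in A\cup\mathcal{C}_\mathbf{A}\}\}$. The matrix $M_\mathbf{A}\in\mathcal{L}_\sigma^{A\times\mathcal{C}_\mathbf{A}}$ has $M_\mathbf{A}[a,R(\mathbf{a})]=(S,R)$ with $S=\{i\in[\operatorname{ar}(R)]: a_i=a\}$ (possibly $S=\emptyset$); for $\ell\in\mathcal{L}_\sigma$, $M^\ell_\mathbf{A}\in\{0,1\}^{A\times\mathcal{C}_\mathbf{A}}$ has entry $1$ exactly where $M_\mathbf{A}$ equals $\ell$. A doubly stochastic matrix is a non-negative matrix all of whose row sums and column sums equal $1$ (in particular its row and column index sets have the same size). A partition of $\mathbf{A}$ is a pair $(\{\mathcal{P}_i\}_{i\in I},\{\mathcal{Q}_j\}_{j\in J})$ of a partition of $A$ and a partition of $\mathcal{C}_\mathbf{A}$. It is equitable if there are integers $c^\ell_{i,j},d^\ell_{j,i}$ (the parameters) such that for all $i,j,\ell$: every $a\in\mathcal{P}_i$ satisfies $|\{R(\mathbf{a})\in\mathcal{Q}_j: M_\mathbf{A}[a,R(\mathbf{a})]=\ell\}|=c^\ell_{i,j}$, and every $R(\mathbf{a})\in\mathcal{Q}_j$ satisfies $|\{a\in\mathcal{P}_i: M_\mathbf{A}[a,R(\mathbf{a})]=\ell\}|=d^\ell_{j,i}$. Two structures $\mathbf{A},\mathbf{B}$ have a common equitable partition if they have equitable partitions $(\{\mathcal{P}^\mathbf{A}_i\}_{i\in I},\{\mathcal{Q}^\mathbf{A}_j\}_{j\in J})$, $(\{\mathcal{P}^\mathbf{B}_i\}_{i\in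 I},\{\mathcal{Q}^\mathbf{B}_j\}_{j\in J})$ with the same parameters and $|\mathcal{P}^\mathbf{A}_i|=|\mathcal{P}^\mathbf{B}_i|$, $|\mathcal{Q}^\mathbf{A}_j|=|\mathcal{Q}^\mathbf{B}_j|$ for all $i,j$. A graph is a structure whose signature consists of one binary relation symbol interpreted as a symmetric irreflexive relation. *)

(* Defs.v *)
From HB Require Import structures.
From mathcomp Require Import all_boot all_order all_algebra.
From mathcomp Require Import finmap multiset.
From mathcomp Require Import Rstruct.
Set Implicit Arguments. Unset Strict Implicit. Unset Printing Implicit Defensive.
Import Order.TTheory GRing.Theory Num.Theory.

Record signature := Signature {
  sym : finType;
  ar : sym -> nat;
  ar_pos : forall R, 0 < ar R }.

Record structure (s : signature) := Structure {
  univ : finType;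
  rel : forall R : sym s, {set (ar R).-tuple univ};
  rel_nonempty : forall R : sym s, rel R != set0 }.
Arguments univ {s}.
Arguments rel {s}.

Section Defs.
Variable s : signature.
Local Notation R := Rdefinitions.R.

Definition label : finType := {R : sym s & {set 'I_(ar R)}}.

Definition cons (A : structure s) : finType :=
  {c : {R : sym s & (ar R).-tuple (univ A)} | tagged c \in rel A (tag c)}.

Definition csym (A : structure s) (c : cons A) : sym s := tag (val c).
Definition ctup (A : structure s) (c : cons A) : (ar (csym c)).-tuple (univ A) :=
  tagged (val c).

(* M_A[a, R(a)] = (S, R) with S = {i | a_i = a} (possibly empty). *)
Definition Mlab (A : structure s) (a : univ A) (c : cons A) : label :=
  Tagged (fun R => {set 'I_(ar R)}) [set i | tnth (ctup c) i == a].

Definition Ml (A : structure s) (l : label) (a : univ A) (c : cons A) : R :=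
  ((Mlab a c == l)%:R)%R.

(* Matrices indexed by finite types, as functions; products as sums. *)
Definition doubly_stochastic (I J : finType) (P : I -> J -> R) : Prop :=
  (forall i j, 0 <= P i j)%R /\
  (forall i, (\sum_(j : J) P i j = 1)%R) /\
  (forall j, (\sum_(i : I) P i j = 1)%R).

Definition cond1 (A B : structure s) : Prop :=
  exists (P : univ B -> univ A -> R) (Q : cons B -> cons A -> R),
    doubly_stochastic P /\ doubly_stochastic Q /\
    forall l : label,
      (* P M^l_A = M^l_B Q  (entries indexed by B x C_A) *)
      (forall (b : univ B) (c : cons A),
         (\sum_(a : univ A) P b a * Ml l a c = \sum_(c' : cons B) Ml l b c' * Q c' c)%R) /\
      (* M^l_A Q^T = P^T M^l_B  (entries indexed by A x C_B) *)
      (forall (a : univ A) (c' : cons B),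
         (\sum_(c : cons A) Ml l a c * Q c' c = \sum_(b : univ B) P b a * Ml l b c')%R).

(* Vertices of the factor graph: A disjoint-union C_A. *)
Definition vert (A : structure s) : finType := (univ A + cons A)%type.

(* Types of iterated degrees: delta_0 is a bool (element vs constraint),
   delta_{j+1} is a finite multiset of pairs (edge label, delta_j). *)
Fixpoint degT (j : nat) : choiceType :=
  match j with
  | 0 => bool
  | j'.+1 => ({mset (label * degT j')%type})%mset
  end.

Definition nbrs (A : structure s) (j : nat) (d : vert A -> degT j) (v : vert A)
  : seq (label * degT j) :=
  match v with
  | inl a => [seq (Mlab a c, d (inr c)) | c <- enum (cons A) & a \in (ctup c : seq _)]
  | inr c => [seq (Mlab a c, d (inl a)) | a <- enum (univ A) & a \in (ctup c : seq _)]
  end.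

Fixpoint deg (A : structure s) (j : nat) : vert A -> degT j :=
  match j return vert A -> degT j with
  | 0 => fun v => if v is inl _ then true else false
  | j'.+1 => fun v => seq_mset (nbrs (@deg A j') v)
  end.
Arguments deg A j v : clear implicits.

(* Condition (2): equal iterated degree sequences, i.e. the multisets
   {{ delta(v) : v in A + C_A }} and {{ delta(w) : w in B + C_B }} of infinite
   sequences coincide: there is a bijection matching vertices with equal
   delta (all coordinates j). *)
Definition cond2 (A B : structure s) : Prop :=
  exists f : vert A -> vert B, bijective f /\
    forall (v : vert A) (j : nat), deg B j (f v) = deg A j v.

(* Equitable partition with given parameters; partitions into blocks indexed
   by 'I_n and 'I_m, given by block-assignment maps. *)
Definition is_partition (T : finType) (n : nat) (p : T -> 'I_n) : Prop :=
  forall i, exists x, p x = i.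

Definition equitable_with (A : structure s) (n m : nat)
  (p : univ A -> 'I_n) (q : cons A -> 'I_m)
  (c : label -> 'I_n -> 'I_m -> nat) (d : label -> 'I_m -> 'I_n -> nat) : Prop :=
  (forall l i j (a : univ A), p a = i ->
      #|[set x : cons A | (q x == j) && (Mlab a x == l)]| = c l i j) /\
  (forall l i j (x : cons A), q x = j ->
      #|[set a : univ A | (p a == i) && (Mlab a x == l)]| = d l j i).

Definition cond3 (A B : structure s) : Prop :=
  exists (n m : nat) (pA : univ A -> 'I_n) (qA : cons A -> 'I_m)
         (pB : univ B -> 'I_n) (qB : cons B -> 'I_m) c d,
    is_partition pA /\ is_partition qA /\ is_partition pB /\ is_partition qB /\
    equitable_with pA qA c d /\ equitable_with pB qB c d /\
    (forall i, #|[set a | pA a == i]| = #|[set b | pB b == i]|) /\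
    (forall j, #|[set x | qA x == j]| = #|[set y | qB y == j]|).

(* Graphs: one binary symbol, interpreted symmetric and irreflexive. *)
Definition is_graph (A : structure s) : Prop :=
  #|sym s| = 1 /\
  forall R : sym s, ar R = 2 /\
    (forall t, t \in rel A R -> uniq t) /\
    (forall t, t \in rel A R -> [exists t' in rel A R, val t' == rev t]).

Definition adj (A : structure s) (a b : univ A) : R :=
  ([exists R : sym s, [exists t in rel A R, val t == [:: a; b]]])%:R%R.

Definition cond4 (A B : structure s) : Prop :=
  exists P : univ B -> univ A -> R, doubly_stochastic P /\
    forall (b : univ B) (a : univ A),
      (\sum_(a' : univ A) P b a' * adj a' a = \sum_(b' : univ B) adj b b' * P b' a)%R.

End Defs.

(* Main.v *)
Require Import Defs.
From mathcomp Require Import all_boot all_order all_algebra.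
From HB Require Import structures.
From mathcomp Require Import finmap multiset Rstruct zify ring lra.
From Stdlib Require Import Classical.
Set Implicit Arguments. Unset Strict Implicit. Unset Printing Implicit Defensive.
Import Order.TTheory GRing.Theory Num.Theory.

Module M1.

Lemma card_count (T : finType) (P : pred T) : #|[pred x | P x]| = count P (enum T).
Proof. by rewrite cardE /enum_mem size_filter count_filter; apply: eq_count => x; rewrite /= andbT. Qed.

Lemma card_set_count (T : finType) (P : pred T) : #|[set x | P x]| = count P (enum T).
Proof. by rewrite -card_count; apply: eq_card => x; rewrite inE. Qed.

Section KeyBij.
Variables (X Y : finType) (K : eqType) (kX : X -> K) (kY : Y -> K).
Hypothesis hk : forall k, #|[set x | kX x == k]| = #|[set y | kY y == k]|.

Lemma key_inj : exists f : X -> Y, injective f /\ forall x, kY (f x) = kX x.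
Proof.
pose sX x := [seq x' <- enum X | kX x' == kX x].
pose sY x := [seq y <- enum Y | kY y == kX x].
have hs x : size (sY x) = size (sX x).
  by rewrite !size_filter -!card_set_count hk.
have hin x : x \in sX x by rewrite mem_filter eqxx mem_enum.
have hlt x : index x (sX x) < size (sY x) by rewrite hs index_mem.
have : forall x, exists y, (y == nth y (sY x) (index x (sX x))).
  move=> x; have := hlt x; case: (sY x) => [|y0 s'] //= Hl.
  exists (nth y0 (y0 :: s') (index x (sX x))).
  by apply/eqP; apply: set_nth_default.
case/fin_all_exists => f Hf.
have hmem x : f x \in sY x by rewrite (eqP (Hf x)) mem_nth.
have hk' x : kY (f x) = kX x by have := hmem x; rewrite mem_filter => /andP[/eqP].
exists f; split => // x1 x2 e.
have ek : kX x1 = kX x2 by rewrite -hk' e hk'.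
have e1 : sX x1 = sX x2 by rewrite /sX ek.
have e2 : sY x1 = sY x2 by rewrite /sY ek.
have := Hf x1; have := Hf x2; rewrite e e1 e2 => /eqP h2 /eqP h1.
have ui : uniq (sY x2) by rewrite filter_uniq // enum_uniq.
have l1 : index x1 (sX x2) < size (sY x2) by rewrite -e1 -e2 hlt.
have : index x1 (sX x2) = index x2 (sX x2).
  apply/eqP; rewrite -(nth_uniq (f x2) l1 (hlt x2) ui).
  by rewrite -h1 -h2.
move=> /(congr1 (nth x1 (sX x2))). rewrite !nth_index //; by rewrite -?e1 ?hin.
Qed.
End KeyBij.

Lemma key_bij (X Y : finType) (K : eqType) (kX : X -> K) (kY : Y -> K) :
  (forall k, #|[set x | kX x == k]| = #|[set y | kY y == k]|) ->
  exists f : X -> Y, bijective f /\ forall x, kY (f x) = kX x.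
Proof.
move=> hk; have [f [fi fk]] := key_inj hk.
have [g [gi _]] := key_inj (fun k => esym (hk k)).
exists f; split => //; exact: (inj_card_bij fi (leq_card g gi)).
Qed.

End M1.
Import M1.

Module M2.
Local Open Scope ring_scope.
Local Notation R := Rdefinitions.R.

Lemma supp (X Y : finType) (P : Y -> X -> R) (u : X -> R) (v : Y -> R) :
  doubly_stochastic P ->
  (forall y, \sum_x P y x * u x = v y) ->
  (forall x, \sum_y P y x * v y = u x) ->
  forall x y, 0 < P y x -> u x = v y.
Proof.
move=> [P0 [Pr Pc]] hu hv x0 y0 Ppos.
have e1 : \sum_y \sum_x P y x * u x ^+ 2 = \sum_x u x ^+ 2.
  rewrite exchange_big /=; apply: eq_bigr => x _.
  by rewrite -mulr_suml Pc mul1r.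
have e2 : \sum_y \sum_x P y x * v y ^+ 2 = \sum_y v y ^+ 2.
  by apply: eq_bigr => y _; rewrite -mulr_suml Pr mul1r.
have e3 : \sum_y \sum_x P y x * (u x * v y) = \sum_y v y ^+ 2.
  apply: eq_bigr => y _.
  have -> : v y ^+ 2 = (\sum_x P y x * u x) * v y by rewrite hu expr2.
  by rewrite mulr_suml; apply: eq_bigr => x _; rewrite mulrA.
have e4 : \sum_y \sum_x P y x * (u x * v y) = \sum_x u x ^+ 2.
  rewrite exchange_big /=; apply: eq_bigr => x _.
  have -> : u x ^+ 2 = (\sum_y P y x * v y) * u x by rewrite hv expr2.
  by rewrite mulr_suml; apply: eq_bigr => y _; ring.
have S0 : \sum_y \sum_x P y x * (u x - v y) ^+ 2 = 0.
  have -> : \sum_y \sum_x P y x * (u x - v y) ^+ 2 =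
     \sum_y \sum_x P y x * u x ^+ 2 + \sum_y \sum_x P y x * v y ^+ 2
     - \sum_y \sum_x P y x * (u x * v y) - \sum_y \sum_x P y x * (u x * v y).
    rewrite -big_split /= -!sumrB; apply: eq_bigr => y _.
    rewrite -big_split /= -!sumrB; apply: eq_bigr => x _; ring.
  rewrite e1 e2 {1}e4 e3; ring.
have nn y x : 0 <= P y x * (u x - v y) ^+ 2 by rewrite mulr_ge0 // sqr_ge0.
have := S0; move/eqP; rewrite psumr_eq0; last first.
  by move=> y _; apply: sumr_ge0 => x _; apply: nn.
move/allP => /(_ y0 (mem_index_enum _)) /implyP /(_ isT) /eqP.
move/eqP; rewrite psumr_eq0; last by move=> x _; apply: nn.
move/allP => /(_ x0 (mem_index_enum _)) /implyP /(_ isT).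
rewrite mulf_eq0 (gt_eqF Ppos) /= sqrf_eq0 subr_eq0 => /eqP //.
Qed.

End M2.
Import M2.

Module M3.
Local Open Scope ring_scope.
Local Notation R := Rdefinitions.R.

Lemma card_sumR (T : finType) (p : pred T) :
  (#|[set x | p x]|%:R : R) = \sum_x (p x)%:R.
Proof.
rewrite -sum1_card big_mkcond natr_sum; apply: eq_bigr => x _.
by rewrite inE; case: (p x).
Qed.

Section DS.
Variables (X Y : finType) (P : Y -> X -> R).
Hypothesis dsP : doubly_stochastic P.

Lemma ds_pos_row y : exists x, 0 < P y x.
Proof.
case: dsP => [P0 [Pr _]]; case: (pickP (fun x => 0 < P y x)) => [x hx|h]; first by exists x.
have : \sum_x P y x = 0 by apply: big1 => x _; apply/eqP; rewrite eq_le P0 andbT leNgt h.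
by rewrite Pr => /eqP; rewrite oner_eq0.
Qed.

Lemma ds_pos_col x : exists y, 0 < P y x.
Proof.
case: dsP => [P0 [_ Pc]]; case: (pickP (fun y => 0 < P y x)) => [y hy|h]; first by exists y.
have : \sum_y P y x = 0 by apply: big1 => y _; apply/eqP; rewrite eq_le P0 andbT leNgt h.
by rewrite Pc => /eqP; rewrite oner_eq0.
Qed.

Variables (K : eqType) (kX : X -> K) (kY : Y -> K).
Hypothesis compat : forall x y, 0 < P y x -> kX x = kY y.

Lemma ds_ind k :
  (forall y, \sum_x P y x * (kX x == k)%:R = (kY y == k)%:R) /\
  (forall x, \sum_y P y x * (kY y == k)%:R = (kX x == k)%:R).
Proof.
case: dsP => [P0 [Pr Pc]]; split.
- move=> y; rewrite -[RHS]mul1r -(Pr y) mulr_suml; apply: eq_bigr => x _.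
  have := P0 y x; rewrite le_eqVlt => /orP[/eqP <-|/compat ->]; by rewrite ?mul0r.
- move=> x; rewrite -[RHS]mul1r -(Pc x) mulr_suml; apply: eq_bigr => y _.
  have := P0 y x; rewrite le_eqVlt => /orP[/eqP <-|/compat ->]; by rewrite ?mul0r.
Qed.

Lemma ds_card k : #|[set x | kX x == k]| = #|[set y | kY y == k]|.
Proof.
case: dsP => [P0 [Pr Pc]].
apply/eqP; rewrite -(eqr_nat R) !card_sumR; apply/eqP.
have [h1 h2] := ds_ind k.
rewrite -(eq_bigr _ (fun x _ => h2 x)) exchange_big /=.
by apply: eq_bigr => y _; rewrite -mulr_suml Pr mul1r.
Qed.
End DS.

Lemma path_inv (T : finType) (e : rel T) (U : Type) (w : T -> U) :
  (forall z z', e z z' -> w z = w z') ->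
  forall z z', connect e z z' -> w z = w z'.
Proof.
move=> he z z' /connectP [p pp ->]; elim: p z pp => //= z1 p IH z /andP[ez pp].
by rewrite (he _ _ ez) IH.
Qed.

Lemma comp_part (X Y : finType) (P : Y -> X -> R) : doubly_stochastic P ->
  exists n (pX : X -> 'I_n) (pY : Y -> 'I_n),
   is_partition pX /\ is_partition pY /\
   (forall x y, 0 < P y x -> pX x = pY y) /\
   (forall i, #|[set x | pX x == i]| = #|[set y | pY y == i]|) /\
   (forall (u : X -> R) (v : Y -> R), (forall x y, 0 < P y x -> u x = v y) ->
       (forall x x', pX x = pX x' -> u x = u x') /\
       (forall x y, pX x = pY y -> u x = v y)).
Proof.
move=> dsP.
pose e : rel (X + Y)%type := fun z z' => match z, z' with
  | inl x, inr y => 0 < P y x | inr y, inl x => 0 < P y x | _, _ => false end.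
have esym : symmetric e by case=> [x|y] [x'|y'].
have csym := sym_connect_sym esym.
pose L := undup (map (fingraph.root e) (enum {: X + Y})).
have memL z : fingraph.root e z \in L by rewrite mem_undup map_f // mem_enum.
have pZlt z : (index (fingraph.root e z) L < size L)%N by rewrite index_mem memL.
pose pZ z : 'I_(size L) := Ordinal (pZlt z).
have pZE z z' : (pZ z == pZ z') = connect e z z'.
  rewrite -root_connect // -val_eqE /=.
  apply/eqP/eqP => [h|->] //.
  by rewrite -(nth_index (fingraph.root e z) (memL z)) h nth_index.
have pZsurj (i : 'I_(size L)) : exists z, pZ z = i.
  have [z0 _] : exists z0 : (X + Y)%type, true.
    have h2 := size_undup (map (fingraph.root e) (enum {: X + Y})).
    rewrite size_map -/L in h2.
    have hL := leq_ltn_trans (leq0n i) (leq_trans (ltn_ord i) h2).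
    by case: (enum {: X + Y}) hL => [|z0 s'] //; exists z0.
  have : nth z0 L i \in L by rewrite mem_nth.
  rewrite {1}/L mem_undup => /mapP [z _ hz]; exists z.
  apply/val_inj => /=; rewrite -hz index_uniq //; exact: undup_uniq.
have pE z z' : pZ z = pZ z' <-> connect e z z' by rewrite -pZE; split => [->|/eqP].
exists (size L), (fun x => pZ (inl x)), (fun y => pZ (inr y)).
have compat x y : 0 < P y x -> pZ (inl x) = pZ (inr y).
  by move=> h; apply/pE; apply: connect1.
split.
  move=> i; have [[x|y] hz] := pZsurj i; first by exists x.
  have [x hx] := ds_pos_row dsP y; exists x; by rewrite (compat _ _ hx).
split.
  move=> i; have [[x|y] hz] := pZsurj i; last by exists y.
  have [y hy] := ds_pos_col dsP x; exists y; by rewrite -(compat _ _ hy).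
split; first exact: compat.
split; first by move=> i; exact: (ds_card dsP compat).
move=> u v huv.
pose w z := match z with inl x => u x | inr y => v y end.
have hw : forall z z', connect e z z' -> w z = w z'.
  apply: path_inv => [[x|y] [x'|y']] //= h; [exact: huv | by rewrite (huv _ _ h)].
split.
  by move=> x x' /pE /hw.
by move=> x y /pE /hw.
Qed.

End M3.
Import M3.

Module M4.
Local Open Scope ring_scope.
Local Notation R := Rdefinitions.R.

Lemma transfer (X Y X' Y' : finType) (P : Y -> X -> R) (Q : Y' -> X' -> R)
  (MA : X -> X' -> R) (MB : Y -> Y' -> R)
  (eq1 : forall y x', \sum_x P y x * MA x x' = \sum_y' MB y y' * Q y' x')
  (eq2 : forall x y', \sum_x' MA x x' * Q y' x' = \sum_y P y x * MB y y')
  (chi : X' -> R) (psi : Y' -> R)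
  (h1 : forall y', \sum_x' Q y' x' * chi x' = psi y')
  (h2 : forall x', \sum_y' Q y' x' * psi y' = chi x') :
  (forall y, \sum_x P y x * (\sum_x' MA x x' * chi x') = \sum_y' MB y y' * psi y') /\
  (forall x, \sum_y P y x * (\sum_y' MB y y' * psi y') = \sum_x' MA x x' * chi x').
Proof.
split.
- move=> y.
  under eq_bigr do rewrite mulr_sumr.
  rewrite exchange_big /=.
  have e x' : \sum_x P y x * (MA x x' * chi x') = \sum_y' MB y y' * Q y' x' * chi x'.
    by rewrite -mulr_suml -eq1 mulr_suml; apply: eq_bigr => x _; ring.
  under eq_bigr do rewrite e.
  rewrite exchange_big /=; apply: eq_bigr => y' _.
  by rewrite -h1 mulr_sumr; apply: eq_bigr => x' _; ring.
- move=> x.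
  under eq_bigr do rewrite mulr_sumr.
  rewrite exchange_big /=.
  have e y' : \sum_y P y x * (MB y y' * psi y') = (\sum_x' MA x x' * Q y' x') * psi y'.
    by rewrite eq2 mulr_suml; apply: eq_bigr => y _; ring.
  under eq_bigr do rewrite e mulr_suml.
  rewrite exchange_big /=; apply: eq_bigr => x' _.
  by rewrite -h2 mulr_sumr; apply: eq_bigr => y' _; ring.
Qed.

Lemma cnt_el (s : signature) (A : structure s) (K : eqType) (q : cons A -> K) a l j :
  (#|[set x | (q x == j) && (Mlab a x == l)]|%:R : R) =
  \sum_x Ml l a x * (q x == j)%:R.
Proof.
rewrite card_sumR; apply: eq_bigr => x _; rewrite /Ml.
by case: (q x == j); case: (Mlab a x == l); rewrite ?mulr0 ?mulr1.
Qed.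

Lemma cnt_co (s : signature) (A : structure s) (K : eqType) (p : univ A -> K) x l i :
  (#|[set a | (p a == i) && (Mlab a x == l)]|%:R : R) =
  \sum_a Ml l a x * (p a == i)%:R.
Proof.
rewrite card_sumR; apply: eq_bigr => a _; rewrite /Ml.
by case: (p a == i); case: (Mlab a x == l); rewrite ?mulr0 ?mulr1.
Qed.

Lemma natr_eq (m n : nat) : (m%:R : R) = n%:R -> m = n.
Proof. by move/eqP; rewrite eqr_nat => /eqP. Qed.

Lemma c1_c3 (s : signature) (A B : structure s) : cond1 A B -> cond3 A B.
Proof.
move=> [P [Q [dsP [dsQ heq]]]].
have [n [pA [pB [sA [sB [cP [cardP propP]]]]]]] := comp_part dsP.
have [m [qA [qB [tA [tB [cQ [cardQ propQ]]]]]]] := comp_part dsQ.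
have [rep hrep] := fin_all_exists sA.
have [repc hrepc] := fin_all_exists tA.
pose c l i j := #|[set x | (qA x == j) && (Mlab (rep i) x == l)]|.
pose d l j i := #|[set a | (pA a == i) && (Mlab a (repc j) == l)]|.
exists n, m, pA, qA, pB, qB, c, d.
have EL : forall l j,
  (forall a a', pA a = pA a' -> #|[set x | (qA x == j) && (Mlab a x == l)]| =
                                #|[set x | (qA x == j) && (Mlab a' x == l)]|) /\
  (forall a b, pA a = pB b -> #|[set x | (qA x == j) && (Mlab a x == l)]| =
                              #|[set y | (qB y == j) && (Mlab b y == l)]|).
  move=> l j.
  have [h1 h2] := ds_ind dsQ cQ j.
  have [eq1 eq2] : (forall b x, \sum_a P b a * Ml l a x = \sum_y Ml l b y * Q y x) /\
                   (forall a y, \sum_x Ml l a x * Q y x = \sum_b P b a * Ml l b y).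
    by split => *; case: (heq l) => [H1 H2]; [apply: H1 | apply: H2].
  have [t1 t2] := transfer eq1 eq2 h1 h2.
  have hs := supp dsP t1 t2.
  have [pr1 pr2] := propP _ _ hs.
  split.
    by move=> a a' /pr1 e; apply: natr_eq; rewrite !cnt_el.
  by move=> a b /pr2 e; apply: natr_eq; rewrite !cnt_el.
have CO : forall l i,
  (forall x x', qA x = qA x' -> #|[set a | (pA a == i) && (Mlab a x == l)]| =
                                #|[set a | (pA a == i) && (Mlab a x' == l)]|) /\
  (forall x y, qA x = qB y -> #|[set a | (pA a == i) && (Mlab a x == l)]| =
                              #|[set b | (pB b == i) && (Mlab b y == l)]|).
  move=> l i.
  have [h1 h2] := ds_ind dsP cP i.
  have [eq1 eq2] : (forall y a, \sum_x Q y x * Ml l a x = \sum_b Ml l b y * P b a) /\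
                   (forall x b, \sum_a Ml l a x * P b a = \sum_y Q y x * Ml l b y).
    split => *; case: (heq l) => [H1 H2].
      rewrite (eq_bigr _ (fun _ _ => mulrC _ _)) H2.
      by apply: eq_bigr => *; rewrite mulrC.
    rewrite (eq_bigr _ (fun _ _ => mulrC _ _)) H1.
    by apply: eq_bigr => *; rewrite mulrC.
  have [t1 t2] := transfer eq1 eq2 h1 h2.
  have hs := supp dsQ t1 t2.
  have [pr1 pr2] := propQ _ _ hs.
  split.
    by move=> x x' /pr1 e; apply: natr_eq; rewrite !cnt_co.
  by move=> x y /pr2 e; apply: natr_eq; rewrite !cnt_co.
do 4 (split; first by []).
split.
  split=> l i j.
    by move=> a <-; apply: (proj1 (EL l j)); rewrite hrep.
  by move=> x <-; apply: (proj1 (CO l i)); rewrite hrepc.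
split.
  split=> l i j.
    by move=> b hb; rewrite -(proj2 (EL l j) (rep i) b) ?hrep.
  by move=> y hy; rewrite -(proj2 (CO l i) (repc j) y) ?hrepc.
by split.
Qed.

End M4.
Import M4.

Module M5.
Local Open Scope ring_scope.
Local Notation R := Rdefinitions.R.

Section Unif.
Variables (X Y : finType) (K : eqType) (pX : X -> K) (pY : Y -> K).
Hypothesis hs : forall i, #|[set x | pX x == i]| = #|[set y | pY y == i]|.
Let sz i : R := (#|[set x | pX x == i]|)%:R.

Definition U (y : Y) (x : X) : R := (pX x == pY y)%:R / sz (pY y).

Lemma sz_pos y : 0 < sz (pY y).
Proof.
rewrite /sz hs ltr0n card_gt0; apply/set0Pn; exists y; by rewrite inE.
Qed.
Lemma sz_posX x : 0 < sz (pX x).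
Proof.
rewrite /sz ltr0n card_gt0; apply/set0Pn; exists x; by rewrite inE.
Qed.

Lemma U_row y (f : X -> R) :
  \sum_x U y x * f x = (\sum_x f x * (pX x == pY y)%:R) / sz (pY y).
Proof. by rewrite mulr_suml; apply: eq_bigr => x _; rewrite /U; field; rewrite gt_eqF ?sz_pos. Qed.

Lemma U_col x (g : Y -> R) :
  \sum_y U y x * g y = (\sum_y g y * (pY y == pX x)%:R) / sz (pX x).
Proof.
rewrite mulr_suml; apply: eq_bigr => y _; rewrite /U eq_sym.
case: eqP => [->|_]; last by rewrite !mulr0 !mul0r.
by field; rewrite gt_eqF ?sz_posX.
Qed.

Lemma U_ds : doubly_stochastic U.
Proof.
split; first by move=> y x; rewrite /U divr_ge0 ?ler0n // ltW ?sz_pos.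
split.
  move=> y; have := U_row y (fun _ => 1).
  under eq_bigr do rewrite mulr1; move=> ->.
  rewrite (eq_bigr _ (fun x _ => mul1r _)) -card_sumR.
  by rewrite mulfV // gt_eqF ?sz_pos.
move=> x; have := U_col x (fun _ => 1).
under eq_bigr do rewrite mulr1; move=> ->.
rewrite (eq_bigr _ (fun x _ => mul1r _)) -card_sumR /sz hs.
by rewrite mulfV // -hs gt_eqF // -/(sz _) sz_posX.
Qed.
End Unif.

Definition equitg (s : signature) (A : structure s) (KP KQ : eqType)
  (p : univ A -> KP) (q : cons A -> KQ)
  (c : label s -> KP -> KQ -> nat) (d : label s -> KQ -> KP -> nat) : Prop :=
  (forall l a j, #|[set x | (q x == j) && (Mlab a x == l)]| = c l (p a) j) /\
  (forall l x i, #|[set a | (p a == i) && (Mlab a x == l)]| = d l (q x) i).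

Lemma dcount (s : signature) (A : structure s) (KP KQ : eqType) (pA : univ A -> KP) (qA : cons A -> KQ) c d :
  equitg pA qA c d -> forall l i j,
  (#|[set a | pA a == i]|%:R : R) * (c l i j)%:R = (#|[set x | qA x == j]|)%:R * (d l j i)%:R.
Proof.
move=> [e1 e2] l i j.
have L : (#|[set a | pA a == i]|%:R : R) * (c l i j)%:R =
   \sum_a (pA a == i)%:R * \sum_x Ml l a x * (qA x == j)%:R.
  rewrite card_sumR mulr_suml; apply: eq_bigr => a _.
  case: eqP => [hi|_]; last by rewrite !mul0r.
  by rewrite -cnt_el e1 hi.
have RR : (#|[set x | qA x == j]|%:R : R) * (d l j i)%:R =
   \sum_x (qA x == j)%:R * \sum_a Ml l a x * (pA a == i)%:R.
  rewrite card_sumR mulr_suml; apply: eq_bigr => x _.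
  case: eqP => [hj|_]; last by rewrite !mul0r.
  by rewrite -cnt_co e2 hj.
rewrite L RR.
rewrite (eq_bigr (fun a => \sum_x (pA a == i)%:R * (Ml l a x * (qA x == j)%:R))); last by move=> a _; rewrite mulr_sumr.
rewrite [RHS](eq_bigr (fun x => \sum_a (qA x == j)%:R * (Ml l a x * (pA a == i)%:R))); last by move=> x _; rewrite mulr_sumr.
rewrite exchange_big /=; apply: eq_bigr => x _; apply: eq_bigr => a _; ring.
Qed.

Lemma div_cross (a b c d : R) : 0 < b -> 0 < d -> a * d = c * b -> a / b = c / d.
Proof.
move=> hb hd h; have -> : a = c * b / d by rewrite -h mulfK ?gt_eqF.
by field; rewrite !gt_eqF.
Qed.

Lemma c3g_c1 (s : signature) (A B : structure s) (KP KQ : eqType)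
  (pA : univ A -> KP) (qA : cons A -> KQ) (pB : univ B -> KP) (qB : cons B -> KQ) c d :
  equitg pA qA c d -> equitg pB qB c d ->
  (forall i, #|[set a | pA a == i]| = #|[set b | pB b == i]|) ->
  (forall j, #|[set x | qA x == j]| = #|[set y | qB y == j]|) -> cond1 A B.
Proof.
move=> eA eB hP hQ.
exists (U pA pB), (U qA qB); split; first exact: (U_ds hP).
split; first exact: (U_ds hQ).
move=> l; split.
- move=> b x; rewrite (U_row hP).
  rewrite [RHS](eq_bigr (fun y => U qA qB y x * Ml l b y)); last by move=> y _; rewrite mulrC.
  rewrite U_col -cnt_co -cnt_el.
  rewrite (proj2 eA) (proj1 eB).
  have h := dcount eA l (pB b) (qA x).
  have p1 := sz_pos hP b; have p2 := sz_posX qA x.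
  apply: div_cross => //; rewrite mulrC -h mulrC //.
- move=> a y.
  rewrite [RHS](eq_bigr (fun b => U pA pB b a * Ml l b y)) //.
  rewrite (eq_bigr (fun x => U qA qB y x * Ml l a x)); last by move=> x _; rewrite mulrC.
  rewrite (U_row hQ) U_col -cnt_co -cnt_el.
  rewrite (proj1 eA) (proj2 eB).
  have h := dcount eA l (pA a) (qB y).
  have p1 := sz_pos hQ y; have p2 := sz_posX pA a.
  apply: div_cross => //. by rewrite mulrC h mulrC.
Qed.

Lemma c3_c1 (s : signature) (A B : structure s) : cond3 A B -> cond1 A B.
Proof.
move=> [n [m [pA [qA [pB [qB [c [d [sA [tA [sB [tB [[eA1 eA2] [[eB1 eB2] [hP hQ]]]]]]]]]]]]]]].
apply: (c3g_c1 (c := c) (d := d) _ _ hP hQ); split => *;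
  by [apply: eA1 | apply: eA2 | apply: eB1 | apply: eB2].
Qed.

End M5.
Import M5.

Module M6.

Section Nbrs.
Variable s : signature.

Definition lnz (l : label s) : bool := tagged l != set0.

Lemma mem_lnz (A : structure s) (a : univ A) (x : cons A) :
  (a \in (ctup x : seq _)) = lnz (Mlab a x).
Proof.
rewrite /lnz /Mlab /=; apply/tnthP/set0Pn => [[i ->]|[i]].
  by exists i; rewrite inE.
by rewrite inE => /eqP <-; exists i.
Qed.

Lemma count_nbrs_el (A : structure s) j (d : vert A -> degT s j) (a : univ A) pr :
  count pr (nbrs d (inl a)) =
  #|[set x | (a \in (ctup x : seq _)) && pr (Mlab a x, d (inr x))]|.
Proof.
rewrite /= count_map count_filter card_set_count; apply: eq_count => x.
by rewrite /= andbC.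
Qed.

Lemma count_nbrs_co (A : structure s) j (d : vert A -> degT s j) (x : cons A) pr :
  count pr (nbrs d (inr x)) =
  #|[set a | (a \in (ctup x : seq _)) && pr (Mlab a x, d (inl a))]|.
Proof.
rewrite /= count_map count_filter card_set_count; apply: eq_count => a.
by rewrite /= andbC.
Qed.

Lemma cm_el (A : structure s) j (d : vert A -> degT s j) (a : univ A) l t :
  count_mem (l, t) (nbrs d (inl a)) =
  #|[set x | lnz l && (Mlab a x == l) && (d (inr x) == t)]|.
Proof.
rewrite count_nbrs_el; apply: eq_card => x; rewrite !inE mem_lnz xpair_eqE.
by case: (Mlab a x =P l) => [->|_] /=; rewrite ?andbF ?andbT.
Qed.

Lemma cm_co (A : structure s) j (d : vert A -> degT s j) (x : cons A) l t :
  count_mem (l, t) (nbrs d (inr x)) =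
  #|[set a | lnz l && (Mlab a x == l) && (d (inl a) == t)]|.
Proof.
rewrite count_nbrs_co; apply: eq_card => a; rewrite !inE mem_lnz xpair_eqE.
by case: (Mlab a x =P l) => [->|_] /=; rewrite ?andbF ?andbT.
Qed.

Lemma deg_perm (A B : structure s) j v w :
  (forall k, count_mem k (nbrs (deg (A:=A) j) v) = count_mem k (nbrs (deg (A:=B) j) w)) ->
  deg (A:=A) j.+1 v = deg (A:=B) j.+1 w.
Proof.
move=> h /=; apply/eq_seq_msetP; rewrite /perm_eq; apply/allP => k _.
by rewrite /= h.
Qed.
End Nbrs.

Lemma card_part (T : finType) (m : nat) (q : T -> 'I_m) (P : pred T) (g : pred 'I_m) :
  #|[set x | P x && g (q x)]| = \sum_(k | g k) #|[set x | (q x == k) && P x]|.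
Proof.
rewrite -sum1_card (partition_big q g) /=; last by move=> x; rewrite inE => /andP[].
apply: eq_bigr => k gk; rewrite -sum1_card; apply: eq_bigl => x.
rewrite !inE; case: eqP => [->|] /=; by rewrite ?gk ?andbT ?andbF.
Qed.

Lemma card_false (T : finType) : #|[set x : T | false]| = 0.
Proof. by apply/eqP; rewrite cards_eq0; apply/eqP/setP => x; rewrite inE. Qed.

Section C32.
Variables (s : signature) (A1 A2 : structure s) (n m : nat).
Variables (p1 : univ A1 -> 'I_n) (q1 : cons A1 -> 'I_m).
Variables (p2 : univ A2 -> 'I_n) (q2 : cons A2 -> 'I_m).
Variables (c : label s -> 'I_n -> 'I_m -> nat) (d : label s -> 'I_m -> 'I_n -> nat).
Hypotheses (e1 : equitable_with p1 q1 c d) (e2 : equitable_with p2 q2 c d).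
Hypotheses (sp1 : is_partition p1) (sq1 : is_partition q1).
Hypotheses (sp2 : is_partition p2) (sq2 : is_partition q2).

Lemma eq_deg j :
  (forall a b, p1 a = p2 b -> deg (A:=A1) j (inl a) = deg (A:=A2) j (inl b)) /\
  (forall x y, q1 x = q2 y -> deg (A:=A1) j (inr x) = deg (A:=A2) j (inr y)).
Proof.
elim: j => [|j [IHe IHc]]; first by split.
split.
- move=> a b hab; apply: deg_perm => -[l t]; rewrite !cm_el.
  case: (lnz l) => /=; last by rewrite !card_false.
  pose g k := [exists y, (q2 y == k) && (deg (A:=A2) j (inr y) == t)].
  have G1 x : (deg (A:=A1) j (inr x) == t) = g (q1 x).
    apply/eqP/existsP => [h | [y /andP [/eqP hy /eqP ht]]].
      have [y hy] := sq2 (q1 x); exists y.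
      by rewrite hy eqxx -(IHc x y (esym hy)) h eqxx.
    by rewrite (IHc x y (esym hy)).
  have G2 y : (deg (A:=A2) j (inr y) == t) = g (q2 y).
    apply/idP/existsP => [h|[y' /andP[/eqP hy' /eqP ht]]].
      by exists y; rewrite eqxx h.
    have [x hx] := sq1 (q2 y).
    have hx' : q1 x = q2 y' by rewrite hx hy'.
    by rewrite -(IHc x y hx) (IHc x y' hx') ht.
  rewrite (eq_card (B := [set x | (Mlab a x == l) && g (q1 x)])); last first.
    by move=> x; rewrite !inE G1.
  rewrite [RHS](eq_card (B := [set y | (Mlab b y == l) && g (q2 y)])); last first.
    by move=> y; rewrite !inE G2.
  rewrite !card_part; apply: eq_bigr => k _.
  by rewrite (proj1 e1 _ _ _ _ erefl) (proj1 e2 _ _ _ _ erefl) hab.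
- move=> x y hxy; apply: deg_perm => -[l t]; rewrite !cm_co.
  case: (lnz l) => /=; last by rewrite !card_false.
  pose g i := [exists b, (p2 b == i) && (deg (A:=A2) j (inl b) == t)].
  have G1 a : (deg (A:=A1) j (inl a) == t) = g (p1 a).
    apply/eqP/existsP => [h | [b /andP [/eqP hb /eqP ht]]].
      have [b hb] := sp2 (p1 a); exists b.
      by rewrite hb eqxx -(IHe a b (esym hb)) h eqxx.
    by rewrite (IHe a b (esym hb)).
  have G2 b : (deg (A:=A2) j (inl b) == t) = g (p2 b).
    apply/idP/existsP => [h|[b' /andP[/eqP hb' /eqP ht]]].
      by exists b; rewrite eqxx h.
    have [a ha] := sp1 (p2 b).
    have ha' : p1 a = p2 b' by rewrite ha hb'.
    by rewrite -(IHe a b ha) (IHe a b' ha') ht.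
  rewrite (eq_card (B := [set a | (Mlab a x == l) && g (p1 a)])); last first.
    by move=> a; rewrite !inE G1.
  rewrite [RHS](eq_card (B := [set b | (Mlab b y == l) && g (p2 b)])); last first.
    by move=> b; rewrite !inE G2.
  rewrite !card_part; apply: eq_bigr => i _.
  by rewrite (proj2 e1 _ _ _ _ erefl) (proj2 e2 _ _ _ _ erefl) hxy.
Qed.
End C32.

Lemma c3_c2 (s : signature) (A B : structure s) : cond3 A B -> cond2 A B.
Proof.
move=> [n [m [pA [qA [pB [qB [c [d [sA [tA [sB [tB [eA [eB [hP hQ]]]]]]]]]]]]]]].
have [fu [[gu fug guf] fuk]] := key_bij hP.
have [fc [[gc fcg gcf] fck]] := key_bij hQ.
exists (fun v => match v with inl a => inl (fu a) | inr x => inr (fc x) end).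
split.
  exists (fun w => match w with inl b => inl (gu b) | inr y => inr (gc y) end).
    by case=> [a|x]; rewrite ?fug ?fcg.
  by case=> [b|y]; rewrite ?guf ?gcf.
move=> v j; have [h1 h2] := eq_deg eA eB sA tA sB tB j.
case: v => [a|x]. symmetry; apply: h1; by rewrite fuk. symmetry; apply: h2; by rewrite fck.
Qed.

End M6.
Import M6.

Module M7.

Section Proj.
Variable s : signature.

Local Unset Implicit Arguments.
Fixpoint proj (j : nat) : degT s j.+1 -> degT s j :=
  match j return degT s j.+1 -> degT s j with
  | 0 => fun m => ~~ has (fun p : label s * bool => p.2) (enum_mset m)
  | j'.+1 => fun m => seq_mset (map (fun p : label s * degT s j'.+1 => (p.1, proj j' p.2)) (enum_mset m))
  end.
Local Set Implicit Arguments.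

Lemma has_nbrs_co (A : structure s) (x : cons A) :
  has (fun p : label s * bool => p.2) (nbrs (deg (A:=A) 0) (inr x)).
Proof.
rewrite /= has_map; apply/hasP.
exists (tnth (ctup x) (Ordinal (ar_pos (csym x)))); last by [].
by rewrite mem_filter mem_tnth mem_enum.
Qed.

Lemma proj_deg (A : structure s) j v : proj j (deg (A:=A) j.+1 v) = deg (A:=A) j v.
Proof.
elim: j v => [|j IH] v.
  rewrite /= (perm_has _ (perm_eq_seq_mset _)).
  case: v => [a|x]; last by rewrite has_nbrs_co.
  by rewrite /= has_map; apply/hasPn => c.
rewrite [LHS]/=.
have -> : seq_mset [seq (p.1, proj j p.2) | p <- enum_mset (seq_mset (nbrs (deg (A:=A) j.+1) v))]
        = seq_mset [seq (p.1, proj j p.2) | p <- nbrs (deg (A:=A) j.+1) v].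
  by apply/eq_seq_msetP; apply: perm_map; exact: perm_eq_seq_mset.
rewrite [RHS]/=; congr seq_mset.
by case: v => [a|x]; rewrite /nbrs -map_comp; apply: eq_map => y; rewrite /comp; congr (_, _); exact: IH.
Qed.

Lemma deg_mono (A B : structure s) v w j k : j <= k ->
  deg (A:=A) k v = deg (A:=B) k w -> deg (A:=A) j v = deg (A:=B) j w.
Proof.
move=> /subnK <-; elim: (k - j) => [|i IH] // h.
apply: IH; move: h; change (i.+1 + j) with (i + j).+1 => h.
by rewrite -[LHS]proj_deg -[RHS]proj_deg h.
Qed.

Lemma deg1_csym (A B : structure s) (x : cons A) (y : cons B) :
  deg (A:=A) 1 (inr x) = deg (A:=B) 1 (inr y) -> csym x = csym y.
Proof.
move=> /eq_seq_msetP h.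
pose a0 := tnth (ctup x) (Ordinal (ar_pos (csym x))).
have : (Mlab a0 x, true) \in nbrs (deg (A:=A) 0) (inr x).
  by apply: map_f; rewrite mem_filter mem_tnth mem_enum.
rewrite (perm_mem h) => /mapP [b _ [e _]].
by [].
Qed.

Lemma stable (A : structure s) : exists J, forall v v' : vert A,
  deg (A:=A) J v = deg (A:=A) J v' -> forall j, deg (A:=A) j v = deg (A:=A) j v'.
Proof.
suff : forall l : seq (vert A * vert A), exists J, forall p, p \in l ->
   deg (A:=A) J p.1 = deg (A:=A) J p.2 -> forall j, deg (A:=A) j p.1 = deg (A:=A) j p.2.
  case/(_ (enum {: vert A * vert A})) => J HJ; exists J => v v'.
  by apply: (HJ (v, v')); rewrite mem_enum.
elim => [|p l [J0 HJ0]]; first by exists 0.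
case: (classic (forall j, deg (A:=A) j p.1 = deg (A:=A) j p.2)) => [hp|].
  exists J0 => q; rewrite inE => /orP [/eqP -> _ //|/HJ0 //].
move=> /not_all_ex_not [j1 hj1]; exists (maxn J0 j1) => q; rewrite inE.
case/orP => [/eqP -> h|/HJ0 hq h].
  by exfalso; apply: hj1; apply: deg_mono h; rewrite leq_maxr.
by apply: hq; apply: deg_mono h; rewrite leq_maxl.
Qed.
End Proj.

End M7.
Import M7.

Module M8.

Lemma count_split (T : Type) (P Q : pred T) (l : seq T) :
  count P l = count (fun x => P x && Q x) l + count (fun x => P x && ~~ Q x) l.
Proof.
elim: l => //= x l ->; case: (P x); case: (Q x) => /=; lia.
Qed.

Lemma card_split (T : finType) (P Q : pred T) :
  #|[set x | P x && ~~ Q x]| = #|[set x | P x]| - #|[set x | P x && Q x]|.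
Proof. by rewrite !card_set_count (count_split P Q) addKn. Qed.

Lemma card_bij (X Y : finType) (f : X -> Y) (P : pred X) (Q : pred Y) :
  bijective f -> (forall x, Q (f x) = P x) ->
  #|[set x | P x]| = #|[set y | Q y]|.
Proof.
move=> fb hQ; have fi := bij_inj fb; case: fb => g fg gf.
rewrite -(card_imset _ fi); apply: eq_card => y; rewrite inE.
apply/imsetP/idP => [[x hx ->]|hy]; first by rewrite hQ; rewrite inE in hx.
by exists (g y); rewrite ?gf // inE -hQ gf.
Qed.

Lemma idx_eq (K : eqType) (L : seq K) (k t0 : K) (j : nat) :
  uniq L -> k \in L -> j < size L -> (index k L == j) = (k == nth t0 L j).
Proof. by move=> u kL jL; apply/eqP/eqP => [<-|->]; [rewrite nth_index | rewrite index_uniq]. Qed.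

Lemma idx_inj (K : eqType) (L : seq K) (k1 k2 : K) :
  k1 \in L -> k2 \in L -> index k1 L = index k2 L -> k1 = k2.
Proof. by move=> h1 h2 e; rewrite -(nth_index k1 h1) e nth_index. Qed.

Section Lab.
Variable s : signature.

Lemma sig_eq (u v : label s) : tag u = tag v -> tagged u == set0 -> tagged v == set0 -> u = v.
Proof. by case: u => R1 S1; case: v => R2 S2 /= e; subst R2 => /eqP -> /eqP ->. Qed.

Lemma lab_empty (A : structure s) (l : label s) (a : univ A) (x : cons A) :
  ~~ lnz l -> (Mlab a x == l) = (csym x == tag l) && ~~ (a \in (ctup x : seq _)).
Proof.
rewrite mem_lnz /lnz negbK => hl; apply/eqP/andP => [e|[/eqP e /negPn h]].
  by split; [rewrite -e | rewrite e negbK].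
by apply: sig_eq.
Qed.
End Lab.

Section K.
Variables (s : signature) (A1 A2 : structure s) (J : nat).

Lemma K_el (a : univ A1) (b : univ A2) :
  deg (A:=A1) J.+1 (inl a) = deg (A:=A2) J.+1 (inl b) ->
  (forall t R, #|[set x | (deg (A:=A1) J (inr x) == t) && (csym x == R)]| =
               #|[set y | (deg (A:=A2) J (inr y) == t) && (csym y == R)]|) ->
  forall l t, #|[set x | (deg (A:=A1) J (inr x) == t) && (Mlab a x == l)]| =
              #|[set y | (deg (A:=A2) J (inr y) == t) && (Mlab b y == l)]|.
Proof.
move=> /eq_seq_msetP hp hg l t.
case lz: (lnz l).
  have e1 := cm_el (deg (A:=A1) J) a l t; have e2 := cm_el (deg (A:=A2) J) b l t.
  rewrite lz /= in e1 e2.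
  rewrite (eq_card (B := [set x | (Mlab a x == l) && (deg (A:=A1) J (inr x) == t)])); last first.
    by move=> x; rewrite !inE andbC.
  rewrite [RHS](eq_card (B := [set y | (Mlab b y == l) && (deg (A:=A2) J (inr y) == t)])); last first.
    by move=> y; rewrite !inE andbC.
  by rewrite -e1 -e2 (permP hp).
have lz' : ~~ lnz l by rewrite lz.
pose pr (p : label s * degT s J) := (tag p.1 == tag l) && (p.2 == t).
have c1 := count_nbrs_el (deg (A:=A1) J) a pr.
have c2 := count_nbrs_el (deg (A:=A2) J) b pr.
rewrite (permP hp) in c1.
rewrite (eq_card (B := [set x | ((deg (A:=A1) J (inr x) == t) && (csym x == tag l)) &&
                                ~~ (a \in (ctup x : seq _))])); last first.
  by move=> x; rewrite !inE (lab_empty _ _ lz') andbA.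
rewrite [RHS](eq_card (B := [set y | ((deg (A:=A2) J (inr y) == t) && (csym y == tag l)) &&
                                ~~ (b \in (ctup y : seq _))])); last first.
  by move=> y; rewrite !inE (lab_empty _ _ lz') andbA.
rewrite !card_split hg; congr (_ - _).
rewrite (eq_card (B := [set x | (a \in (ctup x : seq _)) && pr (Mlab a x, deg (A:=A1) J (inr x))])); last first.
  move=> x; rewrite !inE /pr /=.
  by apply/idP/idP => [/andP[/andP[h1 h2] h3]|/andP[h3 /andP[h2 h1]]]; rewrite h1 h2 h3.
rewrite [RHS](eq_card (B := [set y | (b \in (ctup y : seq _)) && pr (Mlab b y, deg (A:=A2) J (inr y))])); last first.
  move=> y; rewrite !inE /pr /=.
  by apply/idP/idP => [/andP[/andP[h1 h2] h3]|/andP[h3 /andP[h2 h1]]]; rewrite h1 h2 h3.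
by rewrite -c1 -c2.
Qed.

Lemma K_co (x : cons A1) (y : cons A2) :
  deg (A:=A1) J.+1 (inr x) = deg (A:=A2) J.+1 (inr y) ->
  (forall t, #|[set a | deg (A:=A1) J (inl a) == t]| =
             #|[set b | deg (A:=A2) J (inl b) == t]|) ->
  forall l t, #|[set a | (deg (A:=A1) J (inl a) == t) && (Mlab a x == l)]| =
              #|[set b | (deg (A:=A2) J (inl b) == t) && (Mlab b y == l)]|.
Proof.
move=> hd hg l t; have /eq_seq_msetP hp := hd.
have hs : csym x = csym y by apply: deg1_csym; apply: deg_mono hd.
case lz: (lnz l).
  have e1 := cm_co (deg (A:=A1) J) x l t; have e2 := cm_co (deg (A:=A2) J) y l t.
  rewrite lz /= in e1 e2.
  rewrite (eq_card (B := [set a | (Mlab a x == l) && (deg (A:=A1) J (inl a) == t)])); last first.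
    by move=> a; rewrite !inE andbC.
  rewrite [RHS](eq_card (B := [set b | (Mlab b y == l) && (deg (A:=A2) J (inl b) == t)])); last first.
    by move=> b; rewrite !inE andbC.
  by rewrite -e1 -e2 (permP hp).
have lz' : ~~ lnz l by rewrite lz.
case hR: (csym x == tag l); have hR' : (csym y == tag l) = (csym x == tag l) by rewrite hs.
  all: rewrite hR in hR'.
  2:{
  rewrite (eq_card (B := [set a : univ A1 | false])); last first.
    by move=> a; rewrite !inE (lab_empty _ _ lz') hR andbF.
  rewrite [RHS](eq_card (B := [set b : univ A2 | false])); last first.
    by move=> b; rewrite !inE (lab_empty _ _ lz') hR' andbF.
  by rewrite !card_false. }
pose pr (p : label s * degT s J) := p.2 == t.
have c1 := count_nbrs_co (deg (A:=A1) J) x pr.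
have c2 := count_nbrs_co (deg (A:=A2) J) y pr.
rewrite (permP hp) in c1.
rewrite (eq_card (B := [set a | (deg (A:=A1) J (inl a) == t) && ~~ (a \in (ctup x : seq _))])); last first.
  by move=> a; rewrite !inE (lab_empty _ _ lz') hR.
rewrite [RHS](eq_card (B := [set b | (deg (A:=A2) J (inl b) == t) && ~~ (b \in (ctup y : seq _))])); last first.
  by move=> b; rewrite !inE (lab_empty _ _ lz') hR'.
rewrite !card_split hg; congr (_ - _).
rewrite (eq_card (B := [set a | (a \in (ctup x : seq _)) && pr (Mlab a x, deg (A:=A1) J (inl a))])); last first.
  by move=> a; rewrite !inE /pr /= andbC.
rewrite [RHS](eq_card (B := [set b | (b \in (ctup y : seq _)) && pr (Mlab b y, deg (A:=A2) J (inl b))])); last first.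
  by move=> b; rewrite !inE /pr /= andbC.
by rewrite -c1 -c2.
Qed.
End K.

End M8.
Import M8.

Module M9.

Lemma split_bij (s : signature) (A B : structure s) (f : vert A -> vert B) :
  bijective f -> (forall v j, deg (A:=B) j (f v) = deg (A:=A) j v) ->
  exists (fu : univ A -> univ B) (fc : cons A -> cons B),
    bijective fu /\ bijective fc /\
    (forall a j, deg (A:=B) j (inl (fu a)) = deg (A:=A) j (inl a)) /\
    (forall x j, deg (A:=B) j (inr (fc x)) = deg (A:=A) j (inr x)).
Proof.
move=> [g fg gf] hf.
have hu a : exists b, f (inl a) = inl b.
  by case E: (f (inl a)) => [b|y]; [exists b | have := hf (inl a) 0; rewrite E].
have hc x : exists y, f (inr x) = inr y.
  by case E: (f (inr x)) => [b|y]; [have := hf (inr x) 0; rewrite E | exists y].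
have hgu b : exists a, g (inl b) = inl a.
  case E: (g (inl b)) => [a|x]; first by exists a.
  by have := hf (g (inl b)) 0; rewrite gf E.
have hgc y : exists x, g (inr y) = inr x.
  case E: (g (inr y)) => [a|x]; last by exists x.
  by have := hf (g (inr y)) 0; rewrite gf E.
have [fu Hfu] := fin_all_exists hu; have [fc Hfc] := fin_all_exists hc.
have [gu Hgu] := fin_all_exists hgu; have [gc Hgc] := fin_all_exists hgc.
exists fu, fc; split.
  exists gu => [a|b].
    by have := fg (inl a); rewrite Hfu Hgu => -[].
  by have := gf (inl b); rewrite Hgu Hfu => -[].
split.
  exists gc => [x|y].
    by have := fg (inr x); rewrite Hfc Hgc => -[].
  by have := gf (inr y); rewrite Hgc Hfc => -[].
by split => [a|x] j; rewrite -?Hfu -?Hfc hf.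
Qed.

Definition dflt (s : signature) (j : nat) : degT s j :=
  match j return degT s j with 0 => false | j'.+1 => mset0 end.

Lemma c2_c3 (s : signature) (A B : structure s) : cond2 A B -> cond3 A B.
Proof.
move=> [f [fb hf]].
have [fu [fc [fub [fcb [hu hc]]]]] := split_bij fb hf.
have fub' := fub; have fcb' := fcb.
case: fub' => gu fug guf; case: fcb' => gc fcg gcf.
have [J HJ] := stable A.
pose kA a := deg (A:=A) J (inl a).
pose kC x := deg (A:=A) J (inr x).
pose LA := undup (map kA (enum (univ A))).
pose LC := undup (map kC (enum (cons A))).
have memA a : kA a \in LA by rewrite mem_undup map_f // mem_enum.
have memC x : kC x \in LC by rewrite mem_undup map_f // mem_enum.
have ltA a : index (kA a) LA < size LA by rewrite index_mem.
have ltC x : index (kC x) LC < size LC by rewrite index_mem.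
pose pA a : 'I_(size LA) := Ordinal (ltA a).
pose qA x : 'I_(size LC) := Ordinal (ltC x).
pose pB b := pA (gu b).
pose qB y := qA (gc y).
pose t0 := dflt s J.
have hpA a (i : 'I_(size LA)) : (pA a == i) = (kA a == nth t0 LA i).
  by rewrite -val_eqE /= (idx_eq t0) ?undup_uniq.
have hqA x (j : 'I_(size LC)) : (qA x == j) = (kC x == nth t0 LC j).
  by rewrite -val_eqE /= (idx_eq t0) ?undup_uniq.
have pAk a a' : pA a = pA a' -> forall j, deg (A:=A) j (inl a) = deg (A:=A) j (inl a').
  by move=> /(congr1 val) /= /idx_inj -/(_ (memA a) (memA a')) /HJ.
have qAk x x' : qA x = qA x' -> forall j, deg (A:=A) j (inr x) = deg (A:=A) j (inr x').
  by move=> /(congr1 val) /= /idx_inj -/(_ (memC x) (memC x')) /HJ.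
have hub b j : deg (A:=B) j (inl b) = deg (A:=A) j (inl (gu b)) by rewrite -hu guf.
have hcb y j : deg (A:=B) j (inr y) = deg (A:=A) j (inr (gc y)) by rewrite -hc gcf.
have sA : is_partition pA.
  move=> i; have : nth t0 LA i \in LA by rewrite mem_nth.
  rewrite mem_undup => /mapP [a _ ha]; exists a; apply/eqP; by rewrite hpA ha.
have sC : is_partition qA.
  move=> j; have : nth t0 LC j \in LC by rewrite mem_nth.
  rewrite mem_undup => /mapP [x _ hx]; exists x; apply/eqP; by rewrite hqA hx.
have [rep hrep] := fin_all_exists sA.
have [repc hrepc] := fin_all_exists sC.
pose c l i j := #|[set x | (qA x == j) && (Mlab (rep i) x == l)]|.
pose d l j i := #|[set a | (pA a == i) && (Mlab a (repc j) == l)]|.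
have gC t R : #|[set y | (deg (A:=B) J (inr y) == t) && (csym y == R)]| =
              #|[set x | (deg (A:=A) J (inr x) == t) && (csym x == R)]|.
  symmetry; apply: card_bij fcb _ => x.
  by rewrite hc (deg1_csym (esym (hc x 1))).
have gA t : #|[set b | deg (A:=B) J (inl b) == t]| = #|[set a | deg (A:=A) J (inl a) == t]|.
  by symmetry; apply: card_bij fub _ => a; rewrite hu.
have EL (a : univ A) (b : univ B) l j : deg (A:=B) J.+1 (inl b) = deg (A:=A) J.+1 (inl a) ->
  #|[set y | (qB y == j) && (Mlab b y == l)]| = #|[set x | (qA x == j) && (Mlab a x == l)]|.
  move=> hd.
  rewrite (eq_card (B := [set y | (deg (A:=B) J (inr y) == nth t0 LC j) && (Mlab b y == l)])); last first.
    by move=> y; rewrite !inE hqA /kC -hcb.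
  rewrite [RHS](eq_card (B := [set x | (deg (A:=A) J (inr x) == nth t0 LC j) && (Mlab a x == l)])); last first.
    by move=> x; rewrite !inE hqA.
  exact: K_el hd gC l _.
have CO (x : cons A) (y : cons B) l i : deg (A:=B) J.+1 (inr y) = deg (A:=A) J.+1 (inr x) ->
  #|[set b | (pB b == i) && (Mlab b y == l)]| = #|[set a | (pA a == i) && (Mlab a x == l)]|.
  move=> hd.
  rewrite (eq_card (B := [set b | (deg (A:=B) J (inl b) == nth t0 LA i) && (Mlab b y == l)])); last first.
    by move=> b; rewrite !inE hpA /kA -hub.
  rewrite [RHS](eq_card (B := [set a | (deg (A:=A) J (inl a) == nth t0 LA i) && (Mlab a x == l)])); last first.
    by move=> a; rewrite !inE hpA.
  exact: K_co hd gA l _.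
have ELA (a a' : univ A) l j : deg (A:=A) J.+1 (inl a) = deg (A:=A) J.+1 (inl a') ->
  #|[set x | (qA x == j) && (Mlab a x == l)]| = #|[set x | (qA x == j) && (Mlab a' x == l)]|.
  move=> hd.
  rewrite (eq_card (B := [set x | (deg (A:=A) J (inr x) == nth t0 LC j) && (Mlab a x == l)])); last first.
    by move=> x; rewrite !inE hqA.
  rewrite [RHS](eq_card (B := [set x | (deg (A:=A) J (inr x) == nth t0 LC j) && (Mlab a' x == l)])); last first.
    by move=> x; rewrite !inE hqA.
  exact: K_el hd (fun _ _ => erefl) l _.
have COA (x x' : cons A) l i : deg (A:=A) J.+1 (inr x) = deg (A:=A) J.+1 (inr x') ->
  #|[set a | (pA a == i) && (Mlab a x == l)]| = #|[set a | (pA a == i) && (Mlab a x' == l)]|.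
  move=> hd.
  rewrite (eq_card (B := [set a | (deg (A:=A) J (inl a) == nth t0 LA i) && (Mlab a x == l)])); last first.
    by move=> a; rewrite !inE hpA.
  rewrite [RHS](eq_card (B := [set a | (deg (A:=A) J (inl a) == nth t0 LA i) && (Mlab a x' == l)])); last first.
    by move=> a; rewrite !inE hpA.
  exact: K_co hd (fun _ => erefl) l _.
exists (size LA), (size LC), pA, qA, pB, qB, c, d.
split; first exact: sA.
split; first exact: sC.
split; first by move=> i; have [a <-] := sA i; exists (fu a); rewrite /pB fug.
split; first by move=> j; have [x <-] := sC j; exists (fc x); rewrite /qB fcg.
split.
  split => l i j.
    by move=> a ha; apply: ELA; apply: pAk; rewrite ha hrep.
  by move=> x hx; apply: COA; apply: qAk; rewrite hx hrepc.
split.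
  split => l i j.
    move=> b hb; apply: EL; rewrite hub; apply: pAk; by rewrite -/(pB b) hb hrep.
  move=> y hy; apply: CO; rewrite hcb; apply: qAk; by rewrite -/(qB y) hy hrepc.
split.
  by move=> i; apply: card_bij fub _ => a; rewrite /pB fug.
by move=> j; apply: card_bij fcb _ => x; rewrite /qB fcg.
Qed.

End M9.
Import M9.

Module M10.

Lemma card_partT (T K : finType) (q : T -> K) (P : pred T) (g : pred K) :
  #|[set x | P x && g (q x)]| = \sum_(k | g k) #|[set x | (q x == k) && P x]|.
Proof.
rewrite -sum1_card (partition_big q g) /=; last by move=> x; rewrite inE => /andP[].
apply: eq_bigr => k gk; rewrite -sum1_card; apply: eq_bigl => x.
rewrite !inE; case: eqP => [->|] /=; by rewrite ?gk ?andbT ?andbF.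
Qed.

Section Graph.
Variable s : signature.
Hypothesis hs1 : #|sym s| = 1.
Hypothesis har : forall R : sym s, ar R = 2.

Lemma sym_all (R R' : sym s) : R = R'.
Proof.
have /card1P [x hx] : #|sym s| == 1 by rewrite hs1.
have e := hx R; have e' := hx R'; rewrite !inE in e e'.
by rewrite (eqP (esym e)) (eqP (esym e')).
Qed.

Lemma h1 (R : sym s) : 1 < ar R. Proof. by rewrite har. Qed.
Definition i0 (R : sym s) : 'I_(ar R) := Ordinal (ar_pos R).
Definition i1 (R : sym s) : 'I_(ar R) := Ordinal (h1 R).

Lemma i01 (R : sym s) : (i0 R == i1 R) = false. Proof. by rewrite -val_eqE. Qed.

Lemma ord2 (R : sym s) (i : 'I_(ar R)) : i = i0 R \/ i = i1 R.
Proof.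
case: i => [[|[|k]] hk]; [left|right|]; try by apply/val_inj.
by exfalso; move: hk; rewrite har.
Qed.

Definition Gl (R : sym s) (b0 b1 : bool) : label s :=
  Tagged (fun R => {set 'I_(ar R)}) [set i : 'I_(ar R) | ((i == i0 R) && b0) || ((i == i1 R) && b1)].

Lemma Gl_eq (R : sym s) b0 b1 c0 c1 : (Gl R b0 b1 == Gl R c0 c1) = (b0 == c0) && (b1 == c1).
Proof.
rewrite /Gl eq_Tagged /=; apply/eqP/andP => [e|[/eqP -> /eqP ->] //].
have e0 := f_equal (fun S : {set 'I_(ar R)} => i0 R \in S) e.
have e1 := f_equal (fun S : {set 'I_(ar R)} => i1 R \in S) e.
have h10 : (i1 R == i0 R) = false by rewrite eq_sym i01.
move: e0 e1; rewrite /= !inE !eqxx i01 h10 /= ?orbF => -> ->; by rewrite !eqxx.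
Qed.

Section G1.
Variable A : structure s.
Hypothesis gA : is_graph A.

Definition src (x : cons A) := tnth (ctup x) (i0 _).
Definition dst (x : cons A) := tnth (ctup x) (i1 _).

Lemma tup2 x : val (ctup x) = [:: src x; dst x].
Proof.
have sz : size (ctup x) = 2 by rewrite size_tuple har.
apply: (@eq_from_nth _ (src x)); first by rewrite sz.
move=> i; rewrite sz => hi.
case: i hi => [|[|i]] //= _.
  exact: (esym (tnth_nth (src x) (ctup x) (i0 (csym x)))).
exact: (esym (tnth_nth (src x) (ctup x) (i1 (csym x)))).
Qed.

Lemma uniq_sd x : (src x == dst x) = false.
Proof.
have := (proj1 (proj2 (proj2 gA (csym x)))) (ctup x) (valP x).
by rewrite tup2 /= inE andbT => /negbTE.
Qed.

Lemma edge_inj x x' : src x = src x' -> dst x = dst x' -> x = x'.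
Proof.
move=> e1 e2; have h := tup2 x; have h' := tup2 x'.
rewrite e1 e2 -h' in h.
move: x x' h {e1 e2 h'} => [[R t] ht] [[R' t'] ht'] /= h.
have eR := sym_all R R'; subst R'.
have et : t = t' by apply: val_inj.
subst t'; congr exist; exact: bool_irrelevance.
Qed.

Definition adjb (a a' : univ A) :=
  [exists R, [exists t in Defs.rel A R, val t == [:: a; a']]].

Lemma adjb_edge a a' : adjb a a' = [exists x, (src x == a) && (dst x == a')].
Proof.
apply/existsP/existsP => [[R /existsP [t /andP [ht /eqP e]]]|[x /andP[/eqP hs /eqP hd]]].
  pose x : cons A := exist _ (Tagged (fun R => (ar R).-tuple (univ A)) t) ht.
  exists x; have := tup2 x; rewrite /ctup /= e => -[-> ->]; by rewrite !eqxx.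
exists (csym x); apply/existsP; exists (ctup x).
by rewrite (valP x) /= tup2 hs hd eqxx.
Qed.

Lemma adjb_sym a a' : adjb a a' = adjb a' a.
Proof.
suff H : forall a a', adjb a a' -> adjb a' a by apply/idP/idP; apply: H.
move=> {}a {}a' /existsP [R /existsP [t /andP [ht /eqP e]]].
have /existsP [t' /andP [ht' /eqP e']] := (proj2 (proj2 (proj2 gA R))) t ht.
apply/existsP; exists R; apply/existsP; exists t'; by rewrite ht' e' e /= /rev /=.
Qed.

Lemma Mlab_G (E : sym s) a x : Mlab a x = Gl E (src x == a) (dst x == a).
Proof.
rewrite (sym_all E (csym x)) /Mlab /Gl; congr (Tagged _ _).
apply/setP => i; rewrite !inE; case: (ord2 i) => ->; rewrite /src /dst.
  by rewrite eqxx i01 /= orbF.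
have h10 : (i1 (csym x) == i0 (csym x)) = false by rewrite eq_sym i01.
by rewrite eqxx h10.
Qed.

Lemma loopfree a : adjb a a = false.
Proof.
apply/negbTE; rewrite adjb_edge; apply/existsPn => x.
by apply/negP => /andP [/eqP h1' /eqP h2']; have := uniq_sd x; rewrite h1' h2' eqxx.
Qed.

Lemma edge_card a a' : #|[set x | (src x == a) && (dst x == a')]| = adjb a a'.
Proof.
rewrite adjb_edge; case: existsP => [[x /andP [/eqP hs /eqP hd]]|h].
  apply/eqP/cards1P; exists x; apply/setP => y; rewrite !inE.
  apply/andP/eqP => [[/eqP e1 /eqP e2]|->]; last by rewrite hs hd.
  by apply: edge_inj; rewrite ?e1 ?e2.
apply/eqP; rewrite cards_eq0; apply/eqP/setP => y; rewrite !inE.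
by apply/negP => hy; apply: h; exists y.
Qed.

Lemma keyE x a b0 b1 : ((src x == a, dst x == a) == (b0, b1)) =
  match b0, b1 with
  | true, false => src x == a | false, true => dst x == a
  | false, false => ~~ (src x == a) && ~~ (dst x == a) | true, true => false end.
Proof.
have u := uniq_sd x.
case: (src x =P a) => [e|ne]; case: (dst x =P a) => [e'|ne'].
- by move: u; rewrite e e' eqxx.
- by case: b0; case: b1.
- by case: b0; case: b1.
- by case: b0; case: b1.
Qed.

Variable K : eqType.
Variable p : univ A -> K.

Lemma S_count a (k : K * K) :
  #|[set x | ((p (src x), p (dst x)) == k) && (src x == a)]| =
  (p a == k.1) * #|[set a' | adjb a a' && (p a' == k.2)]|.
Proof.
case: k => k1 k2 /=.
case h: (p a == k1); last first.
  rewrite mul0n; apply/eqP; rewrite cards_eq0; apply/eqP/setP => x; rewrite !inE.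
  by apply/negP => /andP [/eqP [e1 _] /eqP e]; move: h; rewrite -e e1 eqxx.
rewrite mul1n.
pose S := [set x | ((p (src x), p (dst x)) == (k1, k2)) && (src x == a)].
have inj : {in S &, injective dst}.
  move=> x x'; rewrite !inE => /andP [_ /eqP e1] /andP [_ /eqP e2] ed.
  by apply: edge_inj => //; rewrite e1 e2.
rewrite -(card_in_imset inj); apply: eq_card => a'; rewrite !inE.
apply/imsetP/andP => [[x]|[ha hp]].
  rewrite inE => /andP [/eqP [_ e2] /eqP e1] ->.
  by rewrite adjb_edge e2 eqxx; split => //; apply/existsP; exists x; rewrite e1 !eqxx.
move: ha; rewrite adjb_edge => /existsP [x /andP [/eqP e1 /eqP e2]].
exists x; last by rewrite e2.
by rewrite inE e1 e2 eqxx andbT (eqP h) (eqP hp).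
Qed.

Lemma D_count a (k : K * K) :
  #|[set x | ((p (src x), p (dst x)) == k) && (dst x == a)]| =
  (p a == k.2) * #|[set a' | adjb a a' && (p a' == k.1)]|.
Proof.
case: k => k1 k2 /=.
case h: (p a == k2); last first.
  rewrite mul0n; apply/eqP; rewrite cards_eq0; apply/eqP/setP => x; rewrite !inE.
  by apply/negP => /andP [/eqP [_ e1] /eqP e]; move: h; rewrite -e e1 eqxx.
rewrite mul1n.
pose S := [set x | ((p (src x), p (dst x)) == (k1, k2)) && (dst x == a)].
have inj : {in S &, injective src}.
  move=> x x'; rewrite !inE => /andP [_ /eqP e1] /andP [_ /eqP e2] ed.
  by apply: edge_inj => //; rewrite e1 e2.
rewrite -(card_in_imset inj); apply: eq_card => a'; rewrite !inE.
apply/imsetP/andP => [[x]|[ha hp]].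
  rewrite inE => /andP [/eqP [e2 _] /eqP e1] ->.
  rewrite adjb_sym adjb_edge e2 eqxx; split => //; apply/existsP; exists x; by rewrite e1 !eqxx.
move: ha; rewrite adjb_sym adjb_edge => /existsP [x /andP [/eqP e1 /eqP e2]].
exists x; last by rewrite e1.
by rewrite inE e1 e2 eqxx andbT (eqP h) (eqP hp).
Qed.

Lemma Z_count a (k : K * K) :
  #|[set x | (~~ (src x == a) && ~~ (dst x == a)) && ((p (src x), p (dst x)) == k)]| =
  #|[set x | ((p (src x), p (dst x)) == k)]|
  - #|[set x | ((p (src x), p (dst x)) == k) && (src x == a)]|
  - #|[set x | ((p (src x), p (dst x)) == k) && (dst x == a)]|.
Proof.
rewrite (eq_card (B := [set x | (((p (src x), p (dst x)) == k) && ~~ (src x == a)) && ~~ (dst x == a)])); last first.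
  by move=> x; rewrite !inE andbC andbA.
rewrite card_split card_split; congr (_ - _).
apply: eq_card => x; rewrite !inE; case: (dst x =P a) => [e|]; rewrite ?andbF ?andbT //.
by have := uniq_sd x; rewrite e => ->; rewrite andbT.
Qed.

Lemma card1_if (a0 : univ A) (P : pred (univ A)) : #|[set a | (a0 == a) && P a]| = P a0.
Proof.
case h: (P a0).
  apply/eqP/cards1P; exists a0; apply/setP => a; rewrite !inE.
  by apply/andP/eqP => [[/eqP -> //]|->]; rewrite eqxx h.
apply/eqP; rewrite cards_eq0; apply/eqP/setP => a; rewrite !inE.
by apply/negP => /andP [/eqP <-]; rewrite h.
Qed.
End G1.

Section G2.
Variables (A1 A2 : structure s) (g1 : is_graph A1) (g2 : is_graph A2) (E : sym s).
Variables (K : eqType) (p1 : univ A1 -> K) (p2 : univ A2 -> K).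
Let k1 (x : cons A1) := (p1 (src x), p1 (dst x)).
Let k2 (y : cons A2) := (p2 (src y), p2 (dst y)).

Lemma G1t a b : p1 a = p2 b ->
  (forall i, #|[set a' | adjb a a' && (p1 a' == i)]| = #|[set b' | adjb b b' && (p2 b' == i)]|) ->
  (forall k, #|[set x | k1 x == k]| = #|[set y | k2 y == k]|) ->
  forall l k, #|[set x | (k1 x == k) && (Mlab a x == l)]| = #|[set y | (k2 y == k) && (Mlab b y == l)]|.
Proof.
move=> hp hnb hsz l k.
rewrite (eq_card (B := [set x | (k1 x == k) && (Gl E (src x == a, dst x == a).1 (src x == a, dst x == a).2 == l)])); last first.
  by move=> x; rewrite !inE (Mlab_G E).
rewrite [RHS](eq_card (B := [set y | (k2 y == k) && (Gl E (src y == b, dst y == b).1 (src y == b, dst y == b).2 == l)])); last first.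
  by move=> y; rewrite !inE (Mlab_G E).
rewrite (card_partT (fun x => (src x == a, dst x == a)) (fun x => k1 x == k) (fun bb => Gl E bb.1 bb.2 == l)).
rewrite (card_partT (fun y => (src y == b, dst y == b)) (fun y => k2 y == k) (fun bb => Gl E bb.1 bb.2 == l)).
apply: eq_bigr => -[b0 b1] _.
rewrite (eq_card (B := [set x | (match b0, b1 with
  | true, false => src x == a | false, true => dst x == a
  | false, false => ~~ (src x == a) && ~~ (dst x == a) | true, true => false end) && (k1 x == k)])); last first.
  by move=> x; rewrite !inE (keyE g1).
rewrite [RHS](eq_card (B := [set y | (match b0, b1 with
  | true, false => src y == b | false, true => dst y == b
  | false, false => ~~ (src y == b) && ~~ (dst y == b) | true, true => false end) && (k2 y == k)])); last first.
  by move=> y; rewrite !inE (keyE g2).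
case: b0; case: b1 => /=.
- by rewrite !card_false.
- rewrite (eq_card (B := [set x | (k1 x == k) && (src x == a)])); last by move=> x; rewrite !inE andbC.
  rewrite [RHS](eq_card (B := [set y | (k2 y == k) && (src y == b)])); last by move=> y; rewrite !inE andbC.
  by rewrite (S_count p1) (S_count p2) hp hnb.
- rewrite (eq_card (B := [set x | (k1 x == k) && (dst x == a)])); last by move=> x; rewrite !inE andbC.
  rewrite [RHS](eq_card (B := [set y | (k2 y == k) && (dst y == b)])); last by move=> y; rewrite !inE andbC.
  by rewrite (D_count g1 p1) (D_count g2 p2) hp hnb.
- rewrite (Z_count g1 p1) (Z_count g2 p2).
  by rewrite (S_count p1) (S_count p2) (D_count g1 p1) (D_count g2 p2) hp !hnb hsz.
Qed.

Lemma G2t x y : k1 x = k2 y ->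
  (forall i, #|[set a | p1 a == i]| = #|[set b | p2 b == i]|) ->
  forall l i, #|[set a | (p1 a == i) && (Mlab a x == l)]| = #|[set b | (p2 b == i) && (Mlab b y == l)]|.
Proof.
move=> hk hsz l i; case: hk => hs hd.
rewrite (eq_card (B := [set a | (p1 a == i) && (Gl E (src x == a, dst x == a).1 (src x == a, dst x == a).2 == l)])); last first.
  by move=> a; rewrite !inE (Mlab_G E).
rewrite [RHS](eq_card (B := [set b | (p2 b == i) && (Gl E (src y == b, dst y == b).1 (src y == b, dst y == b).2 == l)])); last first.
  by move=> b; rewrite !inE (Mlab_G E).
rewrite (card_partT (fun a => (src x == a, dst x == a)) (fun a => p1 a == i) (fun bb => Gl E bb.1 bb.2 == l)).
rewrite (card_partT (fun b => (src y == b, dst y == b)) (fun b => p2 b == i) (fun bb => Gl E bb.1 bb.2 == l)).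
apply: eq_bigr => -[b0 b1] _.
rewrite (eq_card (B := [set a | (match b0, b1 with
  | true, false => src x == a | false, true => dst x == a
  | false, false => ~~ (src x == a) && ~~ (dst x == a) | true, true => false end) && (p1 a == i)])); last first.
  by move=> a; rewrite !inE (keyE g1).
rewrite [RHS](eq_card (B := [set b | (match b0, b1 with
  | true, false => src y == b | false, true => dst y == b
  | false, false => ~~ (src y == b) && ~~ (dst y == b) | true, true => false end) && (p2 b == i)])); last first.
  by move=> b; rewrite !inE (keyE g2).
case: b0; case: b1 => /=.
- by rewrite !card_false.
- by rewrite !card1_if hs.
- by rewrite !card1_if hd.
- rewrite (eq_card (B := [set a | ((p1 a == i) && ~~ (src x == a)) && ~~ (dst x == a)])); last first.
    by move=> a; rewrite !inE andbC andbA.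
  rewrite [RHS](eq_card (B := [set b | ((p2 b == i) && ~~ (src y == b)) && ~~ (dst y == b)])); last first.
    by move=> b; rewrite !inE andbC andbA.
  rewrite !card_split.
  have e1 : #|[set a | ((p1 a == i) && ~~ (src x == a)) && (dst x == a)]| = (p1 (dst x) == i).
    rewrite -(card1_if (dst x) (fun a => p1 a == i)); apply: eq_card => a; rewrite !inE.
    case: (dst x =P a) => [<-|]; rewrite ?andbF ?andbT //.
    by rewrite (uniq_sd g1) andbT.
  have e2 : #|[set b | ((p2 b == i) && ~~ (src y == b)) && (dst y == b)]| = (p2 (dst y) == i).
    rewrite -(card1_if (dst y) (fun b => p2 b == i)); apply: eq_card => b; rewrite !inE.
    case: (dst y =P b) => [<-|]; rewrite ?andbF ?andbT //.
    by rewrite (uniq_sd g2) andbT.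
  have e3 : #|[set a | (p1 a == i) && (src x == a)]| = (p1 (src x) == i).
    by rewrite -(card1_if (src x) (fun a => p1 a == i)); apply: eq_card => a; rewrite !inE andbC.
  have e4 : #|[set b | (p2 b == i) && (src y == b)]| = (p2 (src y) == i).
    by rewrite -(card1_if (src y) (fun b => p2 b == i)); apply: eq_card => b; rewrite !inE andbC.
  by rewrite e1 e2 e3 e4 hs hd hsz.
Qed.
End G2.
End Graph.

End M10.
Import M10.

Module M11.
Local Open Scope ring_scope.
Local Notation R := Rdefinitions.R.

Lemma ds_sum (X Y : finType) (P : Y -> X -> R) (F : X -> R) (G : Y -> R) :
  doubly_stochastic P -> (forall x y, 0 < P y x -> F x = G y) ->
  \sum_x F x = \sum_y G y.
Proof.
move=> [P0 [Pr Pc]] h.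
have e1 : \sum_x F x = \sum_x \sum_y P y x * F x.
  by apply: eq_bigr => x _; rewrite -mulr_suml Pc mul1r.
have e2 : \sum_y G y = \sum_y \sum_x P y x * G y.
  by apply: eq_bigr => y _; rewrite -mulr_suml Pr mul1r.
rewrite e1 e2 exchange_big /=; apply: eq_bigr => y _; apply: eq_bigr => x _.
have := P0 y x; rewrite le_eqVlt => /orP [/eqP <-|/h ->]; by rewrite ?mul0r.
Qed.

Lemma adj_adjb (s : signature) (A : structure s) (a a' : univ A) : adj a a' = (adjb a a')%:R.
Proof. by []. Qed.

Lemma nb_sum (s : signature) (A : structure s) (K : eqType) (p : univ A -> K) a i :
  (#|[set a' | adjb a a' && (p a' == i)]|%:R : R) = \sum_a' adj a a' * (p a' == i)%:R.
Proof.
rewrite card_sumR; apply: eq_bigr => a' _; rewrite adj_adjb.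
by case: (adjb a a'); case: (p a' == i); rewrite ?mulr0 ?mulr1 ?mul0r.
Qed.

Lemma c4_c1 (s : signature) (A B : structure s) :
  is_graph A -> is_graph B -> cond4 A B -> cond1 A B.
Proof.
move=> gA gB [P [dsP hP]].
have hs1 := proj1 gA; have har : forall R, ar R = 2 := fun R => proj1 (proj2 gA R).
have /card1P [E _] : #|sym s| == 1 by rewrite hs1.
have [n [pA [pB [sA [sB [cP [cardP propP]]]]]]] := comp_part dsP.
have NB : forall i,
  (forall a a', pA a = pA a' -> #|[set a'' | adjb a a'' && (pA a'' == i)]| =
                                #|[set a'' | adjb a' a'' && (pA a'' == i)]|) /\
  (forall a b, pA a = pB b -> #|[set a'' | adjb a a'' && (pA a'' == i)]| =
                              #|[set b'' | adjb b b'' && (pB b'' == i)]|) /\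
  (forall a b, 0 < P b a -> #|[set a'' | adjb a a'' && (pA a'' == i)]| =
                              #|[set b'' | adjb b b'' && (pB b'' == i)]|).
  move=> i.
  have [h1 h2] := ds_ind dsP cP i.
  have eq2 : forall a b', \sum_a' adj a a' * P b' a' = \sum_b P b a * adj b b'.
    move=> a b'; have := hP b' a.
    rewrite (eq_bigr (fun a' => adj a a' * P b' a')); last first.
      by move=> a' _; rewrite !adj_adjb (adjb_sym gA) mulrC.
    move=> ->; apply: eq_bigr => b _; by rewrite !adj_adjb (adjb_sym gB) mulrC.
  have [t1 t2] := transfer hP eq2 h1 h2.
  have hs := supp dsP t1 t2.
  have [pr1 pr2] := propP _ _ hs.
  split; first by move=> a a' /pr1 e; apply: natr_eq; rewrite !nb_sum.
  split; first by move=> a b /pr2 e; apply: natr_eq; rewrite !nb_sum.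
  by move=> a b /hs e; apply: natr_eq; rewrite !nb_sum.
pose kA (x : cons A) := (pA (src x), pA (dst har x)).
pose kB (y : cons B) := (pB (src y), pB (dst har y)).
have SZ : forall k, #|[set x | kA x == k]| = #|[set y | kB y == k]|.
  move=> k; apply: natr_eq.
  have eA : #|[set x | kA x == k]| = \sum_a #|[set x | (kA x == k) && (src x == a)]|.
    rewrite (eq_card (B := [set x | (kA x == k) && predT (src x)])); last by move=> x; rewrite !inE andbT.
    rewrite (card_partT (fun x : cons A => src x) (fun x => kA x == k) predT).
    by apply: eq_bigr => a _; apply: eq_card => x; rewrite !inE andbC.
  have eB : #|[set y | kB y == k]| = \sum_b #|[set y | (kB y == k) && (src y == b)]|.
    rewrite (eq_card (B := [set y | (kB y == k) && predT (src y)])); last by move=> y; rewrite !inE andbT.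
    rewrite (card_partT (fun y : cons B => src y) (fun y => kB y == k) predT).
    by apply: eq_bigr => b _; apply: eq_card => y; rewrite !inE andbC.
  rewrite eA eB !natr_sum; apply: ds_sum dsP _ => a b hab.
  rewrite (S_count hs1 har pA) (S_count hs1 har pB) (cP _ _ hab).
  by rewrite (proj2 (proj2 (NB k.2)) _ _ hab).
pose c l i k := if [pick a | pA a == i] is Some a then #|[set x | (kA x == k) && (Mlab a x == l)]| else 0%N.
pose d l k i := if [pick x | kA x == k] is Some x then #|[set a | (pA a == i) && (Mlab a x == l)]| else 0%N.
have eA : equitg pA kA c d.
  split => l.
    move=> a k; rewrite /c; case: pickP => [a' /eqP ha|h]; last by have := h a; rewrite eqxx.
    apply: (G1t hs1 (har:=har) gA gA E) => //; first by move=> i; apply: (proj1 (NB i)).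
  move=> x i; rewrite /d; case: pickP => [x' /eqP hx|h]; last by have := h x; rewrite eqxx.
  by apply: (G2t hs1 (har:=har) gA gA E) => //; rewrite -hx.
have eB : equitg pB kB c d.
  split => l.
    move=> b k; rewrite /c; case: pickP => [a' /eqP ha|h].
      symmetry; apply: (G1t hs1 (har:=har) gA gB E) => //.
      by move=> i; apply: (proj1 (proj2 (NB i))).
    exfalso; have : (0 < #|[set a | pA a == pB b]|)%N.
      by rewrite cardP card_gt0; apply/set0Pn; exists b; rewrite inE.
    rewrite card_gt0 => /set0Pn [a]; rewrite inE => /eqP ha.
    by have := h a; rewrite ha eqxx.
  move=> y i; rewrite /d; case: pickP => [x' /eqP hx|h].
    by symmetry; apply: (G2t hs1 (har:=har) gA gB E) => //.
  exfalso; have : (0 < #|[set x | kA x == kB y]|)%N.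
    by rewrite SZ card_gt0; apply/set0Pn; exists y; rewrite inE.
  rewrite card_gt0 => /set0Pn [x]; rewrite inE => /eqP hx.
  by have := h x; rewrite hx eqxx.
exact: (c3g_c1 eA eB cardP SZ).
Qed.

Lemma adj_dec (s : signature) (A : structure s) (gA : is_graph A) (har : forall R : sym s, ar R = 2)
  (E : sym s) (a a' : univ A) :
  adj a a' = \sum_c Ml (Gl har E true false) a c * Ml (Gl har E false true) a' c.
Proof.
have hs1 := proj1 gA.
rewrite adj_adjb -(edge_card hs1 har) card_sumR; apply: eq_bigr => c _.
rewrite /Ml !(Mlab_G hs1 har E) !Gl_eq !eqb_id !eqbF_neg.
have u := uniq_sd har gA c.
case: (src c =P a) => [ea|na]; case: (dst har c =P a') => [ea'|na'] /=;
  rewrite ?mulr1 ?mulr0 ?mul0r ?mul1r ?andbF ?andbT //=.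
all: try (move: u; rewrite ea ea' => u; by rewrite eq_sym u /= mulr1).
all: try (by case: (dst har c == a); rewrite ?mul0r ?mulr0).
all: try (by case: (src c == a'); rewrite ?mul0r ?mulr0).
Qed.

Lemma c1_c4 (s : signature) (A B : structure s) :
  is_graph A -> is_graph B -> cond1 A B -> cond4 A B.
Proof.
move=> gA gB [P [Q [dsP [dsQ heq]]]].
have hs1 := proj1 gA; have har : forall R, ar R = 2 := fun R => proj1 (proj2 gA R).
have /card1P [E _] : #|sym s| == 1 by rewrite hs1.
exists P; split => // b a.
pose l0 := Gl har E true false; pose l1 := Gl har E false true.
have hA : forall a a' : univ A, adj a a' = \sum_c Ml l0 a c * Ml l1 a' c.
  by move=> x y; rewrite (adj_dec gA har E).
have hB : forall b b' : univ B, adj b b' = \sum_c Ml l0 b c * Ml l1 b' c.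
  by move=> x y; rewrite (adj_dec gB har E).
transitivity (\sum_c (\sum_a' P b a' * Ml l0 a' c) * Ml l1 a c).
  rewrite (eq_bigr (fun a' => \sum_c P b a' * (Ml l0 a' c * Ml l1 a c))); last first.
    by move=> a' _; rewrite hA mulr_sumr.
  rewrite exchange_big /=; apply: eq_bigr => c _; rewrite mulr_suml; apply: eq_bigr => a' _; ring.
transitivity (\sum_c (\sum_y Ml l0 b y * Q y c) * Ml l1 a c).
  by apply: eq_bigr => c _; rewrite (proj1 (heq l0)).
transitivity (\sum_y Ml l0 b y * (\sum_c Ml l1 a c * Q y c)).
  rewrite (eq_bigr (fun c => \sum_y Ml l0 b y * (Ml l1 a c * Q y c))); last first.
    by move=> c _; rewrite mulr_suml; apply: eq_bigr => y _; ring.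
  by rewrite exchange_big /=; apply: eq_bigr => y _; rewrite mulr_sumr.
transitivity (\sum_y Ml l0 b y * (\sum_b' P b' a * Ml l1 b' y)).
  by apply: eq_bigr => y _; rewrite (proj2 (heq l1)).
rewrite (eq_bigr (fun y => \sum_b' P b' a * (Ml l0 b y * Ml l1 b' y))); last first.
  by move=> y _; rewrite mulr_sumr; apply: eq_bigr => b' _; ring.
rewrite exchange_big /=; apply: eq_bigr => b' _; rewrite hB mulr_suml.
by apply: eq_bigr => y _; ring.
Qed.


End M11.
Import M11.

Theorem theorem3p2 (s : signature) (A B : structure s) :
  (cond1 A B <-> cond2 A B) /\ (cond2 A B <-> cond3 A B) /\
  (is_graph A -> is_graph B -> (cond4 A B <-> cond1 A B)).
Proof.
split; first by split => h; [apply: c3_c2; apply: c1_c3 | apply: c3_c1; apply: c2_c3].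
split; first by split; [apply: c2_c3 | apply: c3_c2].
by move=> gA gB; split; [apply: c4_c1 | apply: c1_c4].
Qed.
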